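(* Consider the coding-DNA embedding setting described in the context. Suppose the host codon $\mathbf{X}$ is uniformly distributed on $\mathcal{X}^3$ and $X'=\alpha(\mathbf{X})$, i.e. $p(x')=|\mathcal{S}_{x'}|/64$ for all $x'\in\mathcal{X}'$. Then the achievable rate is $$R_\mathrm{c}^{\alpha(\mathrm{unif})}=\widetilde{C}_\mathrm{nc}-H(X')\ \text{bits/codon},$$ where $\widetilde{C}_\mathrm{nc}=\max_{p(\mathbf{u})} I(\mathbf{Z}_{(m)};\mathbf{U})$, the maximum being taken without constraint over all distributions of $\mathbf{U}$ on $\mathcal{X}^3$ (the capacity of the codon mutation channel $\Pi^m\otimes\Pi^m\otimes\Pi^m$).
   Context: Let $\mathcal{X}=\{\mathrm{A},\mathrm{C},\mathrm{T},\mathrm{G}\}$ (DNA bases); codons are elements of $\mathcal{X}^3$. Let $\mathcal{X}'=\{$Ala, Arg, Asn, Asp, Cys, Gln, Glu, Gly, His, Ile, Leu, Lys, Met, Phe, Pro, Ser, Thr, Trp, Tyr, Val, Stp$\}$. The genetic code is the map $\alpha:\mathcal{X}^3\to\mathcal{X}'$ whose fibres $\mathcal{S}_{x'}=\{\mathbf{x}\in\mathcal{X}^3:\alpha(\mathbf{x})=x'\}$ are: Ala: GCA, GCC, GCT, GCG; Arg: AGA, AGG, CGA, CGC, CGT, CGG; Asn: AAC, AAT; Asp: GAC, GAT; Cys: TGC, TGT; Gln: CAA, CAG; Glu: GAA, GAG; Gly: GGA, GGC, GGT, GGG; His: CAC, CAT; Ile: ATA, ATC, ATT; Leu: CTA,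 CTC, CTT, CTG, TTA, TTG; Lys: AAA, AAG; Met: ATG; Phe: TTC, TTT; Pro: CCA, CCC, CCT, CCG; Ser: AGC, AGT, TCA, TCC, TCT, TCG; Thr: ACA, ACC, ACT, ACG; Trp: TGG; Tyr: TAC, TAT; Val: GTA, GTC, GTT, GTG; Stp: TAA, TAG, TGA. These 21 sets partition $\mathcal{X}^3$. Mutation channel (Kimura model): for parameters $q\in[0,1]$ and $\gamma\in[0,3/2]$, the $4\times4$ base transition matrix $\Pi=[p(Z=z|Y=y)]$ (rows/columns ordered A, C, T, G) has diagonal entries $1-q$, entries $(1-2\gamma/3)q$ for the pairs $\{\mathrm{A},\mathrm{G}\}$ and $\{\mathrm{C},\mathrm{T}\}$, and entries $\gamma q/3$ for all other off-diagonal pairs. After $m\ge1$ cascaded independent mutation stages, a codon $\mathbf{u}$ is mapped to a random codon $\mathbf{Z}_{(m)}$ through the $64\times64$ transition matrix $\Pi^m\otimes\Pi^m\otimes\Pi^m$ (bases mutate independently). Achievable rate: given a distribution $p(x')$ of the host amino acid $X'$ on $\mathcal{X}'$, consider conditional distributions $p(\mathbf{u}|x')$ supported on $\mathcal{S}_{x'}$, and let $\mathbf{U}$ be the codon with $p(\mathbf{u})=p(x')p(\mathbf{u}|x')$ for $\mathbf{u}\in\mathcal{S}_{x'}$; $\mathbf{U}$ is the channel input and $\mathbf{Z}_{(m)}$ the output. The achievable rate is $R_\mathrm{c}^{X'}=\max_{p(\mathbf{u}|x')} I(\mathbf{Z}_{(m)};\mathbf{U})-H(X')$ bits/codon (logarithms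 base 2); $R_\mathrm{c}^{\alpha(\mathrm{unif})}$ denotes this rate when $X'=\alpha(\mathbf{X})$ with $\mathbf{X}$ uniform on $\mathcal{X}^3$. *)

(* Defs.v *)
From HB Require Import structures.
From mathcomp Require Import all_boot all_order all_algebra.
From mathcomp Require Import reals exp.
Set Implicit Arguments. Unset Strict Implicit. Unset Printing Implicit Defensive.
Import Order.TTheory GRing.Theory Num.Theory.
Local Open Scope ring_scope.

(* DNA bases: 'I_4 with A = 0, C = 1, T = 2, G = 3. *)
Definition base := 'I_4.
Definition codon := (base * base * base)%type.

(* Amino acids (and stop): 'I_21 in the order
   Ala=0 Arg=1 Asn=2 Asp=3 Cys=4 Gln=5 Glu=6 Gly=7 His=8 Ile=9 Leu=10
   Lys=11 Met=12 Phe=13 Pro=14 Ser=15 Thr=16 Trp=17 Tyr=18 Val=19 Stp=20. *)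
Definition aa := 'I_21.

(* Genetic code on numeric base codes (a b c = 1st 2nd 3rd base). *)
Definition aa_code (a b c : nat) : nat :=
  let pyr := (c == 1)%N || (c == 2)%N in   (* third base C or T *)
  match a, b with
  | 2, 2 => if pyr then 13 else 10          (* TTC TTT Phe; TTA TTG Leu *)
  | 2, 1 => 15                              (* TCx Ser *)
  | 2, 0 => if pyr then 18 else 20          (* TAC TAT Tyr; TAA TAG Stp *)
  | 2, 3 => if pyr then 4 else if (c == 0)%N then 20 else 17
                                            (* TGC TGT Cys; TGA Stp; TGG Trp *)
  | 1, 2 => 10                              (* CTx Leu *)
  | 1, 1 => 14                              (* CCx Pro *)
  | 1, 0 => if pyr then 8 else 5            (* CAC CAT His; CAA CAG Gln *)
  | 1, 3 => 1                               (* CGx Arg *)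
  | 0, 2 => if (c == 3)%N then 12 else 9    (* ATG Met; ATA ATC ATT Ile *)
  | 0, 1 => 16                              (* ACx Thr *)
  | 0, 0 => if pyr then 2 else 11           (* AAC AAT Asn; AAA AAG Lys *)
  | 0, 3 => if pyr then 15 else 1           (* AGC AGT Ser; AGA AGG Arg *)
  | 3, 2 => 19                              (* GTx Val *)
  | 3, 1 => 0                               (* GCx Ala *)
  | 3, 0 => if pyr then 3 else 6            (* GAC GAT Asp; GAA GAG Glu *)
  | 3, 3 => 7                               (* GGx Gly *)
  | _, _ => 0
  end.

Definition alpha (u : codon) : aa :=
  inord (aa_code u.1.1 u.1.2 u.2).

Section Channel.
Variable R : realType.

Definition log2 (x : R) : R := ln x / ln 2.

(* Kimura base transition matrix; transitions are {A,G} = {0,3} and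
   {C,T} = {1,2}, i.e. exactly the off-diagonal pairs with y + z = 3. *)
Definition Pi (q g : R) : 'M[R]_4 :=
  \matrix_(y < 4, z < 4)
    if y == z then 1 - q
    else if (y + z == 3)%N then (1 - 2 * g / 3) * q
    else g * q / 3.

Definition W (q g : R) (m : nat) (u z : codon) : R :=
  let P := Pi q g ^+ m in
  P u.1.1 z.1.1 * P u.1.2 z.1.2 * P u.2 z.2.

Definition is_dist (T : finType) (p : T -> R) : Prop :=
  (forall t, 0 <= p t) /\ \sum_t p t = 1.

Definition pZ q g m (p : codon -> R) (z : codon) : R :=
  \sum_u p u * W q g m u z.

Definition MI q g m (p : codon -> R) : R :=
  \sum_u \sum_z
    (let j := p u * W q g m u z in
     if j == 0 then 0 else j * log2 (W q g m u z / pZ q g m p z)).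

Definition entropy (T : finType) (p : T -> R) : R :=
  - \sum_t (if p t == 0 then 0 else p t * log2 (p t)).

Definition p_alpha (x' : aa) : R :=
  #|[set u : codon | alpha u == x']|%:R / 64.

Definition admissible_cond (c : aa -> codon -> R) : Prop :=
  forall x', is_dist (c x') /\ (forall u, alpha u != x' -> c x' u = 0).

Definition joint (px : aa -> R) (c : aa -> codon -> R) (u : codon) : R :=
  px (alpha u) * c (alpha u) u.

Definition is_max (P : R -> Prop) (v : R) : Prop :=
  P v /\ forall x, P x -> x <= v.

End Channel.

(* Main.v *)
Require Import Defs.
From HB Require Import structures.
From mathcomp Require Import all_boot all_order all_algebra.
From mathcomp Require Import reals exp.
From mathcomp Require Import ring lra.
Import Order.TTheory GRing.Theory Num.Theory.
Local Open Scope ring_scope.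
Definition bxn (a b : nat) : nat :=
  (odd a (+) odd b)%N + 2 * (odd a./2 (+) odd b./2)%N.
Definition bx (a b : 'I_4) : 'I_4 := inord (bxn a b).
Lemma bxn_lt a b : (bxn a b < 4)%N.
Proof. rewrite /bxn; by case: (_ (+) _); case: (_ (+) _). Qed.
Lemma bxE a b : nat_of_ord (bx a b) = bxn a b.
Proof. by rewrite /bx inordK // bxn_lt. Qed.
Ltac c4 a := case: a => [[|[|[|[|?]]]] ?] //.
Lemma bx_inv a b : bx a (bx a b) = b.
Proof. apply/val_inj; rewrite /= !bxE; c4 a; c4 b. Qed.
Lemma bx_eq k y z : (bx k y == bx k z) = (y == z).
Proof. rewrite -val_eqE /= !bxE; c4 k; c4 y; c4 z. Qed.
Lemma bx_3 k y z : (bx k y + bx k z == 3)%N = (y + z == 3)%N.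
Proof. rewrite !bxE; c4 k; c4 y; c4 z. Qed.
Definition l64 := [seq (n %/ 16, n %/ 4 %% 4, n %% 4)%N | n <- iota 0 64].
Lemma surjn : all (fun n => has (fun t => aa_code t.1.1 t.1.2 t.2 == n) l64) (iota 0 21).
Proof. by vm_compute. Qed.
Lemma alpha_surj (x : aa) : exists u, alpha u = x.
Proof.
have /allP/(_ x) := surjn.
rewrite mem_iota add0n ltn_ord leq0n. move=> H. move: (H isT) => /hasP [[[a b] c]].
move=> /mapP [n]; rewrite mem_iota add0n => Hn [-> -> ->] /= /eqP E.
have Ha : (n %/ 16 < 4)%N by rewrite ltn_divLR.
have Hb : (n %/ 4 %% 4 < 4)%N by rewrite ltn_mod.
have Hc : (n %% 4 < 4)%N by rewrite ltn_mod.
exists (Ordinal Ha, Ordinal Hb, Ordinal Hc).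
by apply/val_inj; rewrite /alpha /= inordK // E.
Qed.
Lemma bx_inj k : injective (bx k).
Proof. exact: (can_inj (bx_inv k)). Qed.

Section S.
Variable R : realType.
Variables q g : R.
Hypothesis hq : 0 <= q <= 1.
Hypothesis hg : 0 <= g <= 3 / 2.

Lemma Pi_ge0 y z : 0 <= Pi q g y z.
Proof.
case/andP: hq => ? ?; case/andP: hg => ? ?.
rewrite mxE; case: ifP => _; first lra; case: ifP => _; nra.
Qed.
Lemma Pi_inv k y z : Pi q g (bx k y) (bx k z) = Pi q g y z.
Proof. by rewrite !mxE bx_eq bx_3. Qed.
Lemma Pi_sym y z : Pi q g y z = Pi q g z y.
Proof. by rewrite !mxE eq_sym addnC. Qed.
Lemma Pi_row y : \sum_z Pi q g y z = 1.
Proof.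
rewrite !big_ord_recr big_ord0 /= !mxE.
c4 y; rewrite /=; ring.
Qed.
Lemma Pi_col z : \sum_y Pi q g y z = 1.
Proof. rewrite -(Pi_row z); apply: eq_bigr => y _; exact: Pi_sym. Qed.

Lemma mulE (A B : 'M[R]_4) i j : (A * B) i j = \sum_k A i k * B k j.
Proof. by rewrite -mulmxE mxE. Qed.
Lemma oneE i j : (1 : 'M[R]_4) i j = (i == j)%:R.
Proof. by rewrite mxE. Qed.

Lemma Pm_ge0 n y z : 0 <= (Pi q g ^+ n) y z.
Proof.
elim: n y z => [|n IH] y z; first by rewrite expr0 oneE ler0n.
rewrite exprSr mulE; apply: sumr_ge0 => k _; apply: mulr_ge0 => //; exact: Pi_ge0.
Qed.
Lemma Pm_row n y : \sum_z (Pi q g ^+ n) y z = 1.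
Proof.
elim: n y => [|n IH] y.
  rewrite expr0 (bigD1 y) //= oneE eqxx big1 ?addr0 // => z /negPf.
  by rewrite oneE eq_sym => ->.
rewrite exprSr; under eq_bigr do rewrite mulE.
rewrite exchange_big /= -(IH y); apply: eq_bigr => k _.
by rewrite -mulr_sumr Pi_row mulr1.
Qed.
Lemma Pm_col n z : \sum_y (Pi q g ^+ n) y z = 1.
Proof.
elim: n z => [|n IH] z.
  rewrite expr0 (bigD1 z) //= oneE eqxx big1 ?addr0 // => y /negPf.
  by rewrite oneE => ->.
rewrite exprSr; under eq_bigr do rewrite mulE.
rewrite exchange_big /= -(Pi_col z); apply: eq_bigr => k _.
by rewrite -mulr_suml IH mul1r.
Qed.
Lemma Pm_inv n k y z : (Pi q g ^+ n) (bx k y) (bx k z) = (Pi q g ^+ n) y z.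
Proof.
elim: n y z => [|n IH] y z; first by rewrite expr0 !oneE bx_eq.
rewrite exprSr !mulE (reindex_inj (bx_inj k)) /=.
by apply: eq_bigr => w _; rewrite IH Pi_inv.
Qed.
Lemma bx_self a : bx a a = ord0.
Proof. apply/val_inj; rewrite /= bxE; c4 a. Qed.

Lemma key (pu w y : R) : 0 < pu -> 0 < w -> 0 < y ->
  pu * w * log2 (w / y) <=
  pu * (w * log2 (64 * w)) + pu * w * ((64 * y)^-1 - 1) / ln 2.
Proof.
move=> hp hw hy.
have L0 : 0 < ln (2 : R) by apply: ln_gt0; lra.
have h64 : (0 : R) < 64 by lra.
have hl : ln ((64 * y)^-1) <= (64 * y)^-1 - 1.
  have h1 : 0 < (64 * y)^-1 by rewrite invr_gt0 mulr_gt0.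
  have := @le_ln1Dx R ((64 * y)^-1 - 1); rewrite [1 + _]addrC subrK; apply; lra.
rewrite lnV ?posrE ?mulr_gt0 // lnM ?posrE // in hl.
rewrite /log2 ln_div ?posrE // lnM ?posrE ?mulr_gt0 //.
set a := ln 64 in hl *; set b := ln w; set c := ln y in hl *.
set t := (64 * y)^-1 in hl *; set L := ln 2 in L0 *.
rewrite -subr_ge0.
have -> : pu * (w * ((a + b) / L)) + pu * w * (t - 1) / L - pu * w * ((b - c) / L)
   = (pu * w) * (a + c + (t - 1)) / L.
  by field; rewrite gt_eqF.
apply: divr_ge0; last exact: ltW.
apply: mulr_ge0; first by rewrite ltW // mulr_gt0.
lra.
Qed.
Variable m : nat.
Local Notation P := (Pi q g ^+ m).
Local Notation Wm := (W q g m).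

Lemma sum3 (a b c : base -> R) :
  \sum_(u : codon) a u.1.1 * b u.1.2 * c u.2 = (\sum_i a i) * (\sum_j b j) * (\sum_k c k).
Proof.
rewrite -(pair_bigA _ (fun (ab : base * base) (k : base) => a ab.1 * b ab.2 * c k)) /=.
rewrite -(pair_bigA _ (fun i j => \sum_k a i * b j * c k)) /=.
rewrite [X in X * _]mulr_suml mulr_suml; apply: eq_bigr => i _.
rewrite [X in X * _]mulr_sumr mulr_suml; apply: eq_bigr => j _.
by rewrite mulr_sumr.
Qed.

Lemma W_ge0 u z : 0 <= Wm u z.
Proof. by rewrite /W !mulr_ge0 // Pm_ge0. Qed.
Lemma W_row u : \sum_z Wm u z = 1.
Proof.
rewrite /W (sum3 (fun i => P u.1.1 i) (fun i => P u.1.2 i) (fun i => P u.2 i)).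
by rewrite !Pm_row // !mul1r.
Qed.
Lemma W_col z : \sum_u Wm u z = 1.
Proof.
rewrite /W (sum3 (fun i => P i z.1.1) (fun i => P i z.1.2) (fun i => P i z.2)).
by rewrite !Pm_col // !mul1r.
Qed.

Definition c0 : codon := (ord0, ord0, ord0).
Definition bxc (u z : codon) : codon := (bx u.1.1 z.1.1, bx u.1.2 z.1.2, bx u.2 z.2).
Lemma bxc_inj u : injective (bxc u).
Proof.
move=> [[a b] c] [[a' b'] c'] [/bx_inj -> /bx_inj -> /bx_inj ->] //.
Qed.
Lemma W_shift u z : Wm u z = Wm c0 (bxc u z).
Proof.
have Pb a b : P a b = P ord0 (bx a b).
  by rewrite -(Pm_inv m a) bx_self.
by rewrite /W /= (Pb u.1.1) (Pb u.1.2) (Pb u.2).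
Qed.
Definition fW (x : R) : R := if x == 0 then 0 else x * log2 (64 * x).
Definition K : R := \sum_z fW (Wm c0 z).
Lemma K_u u : \sum_z fW (Wm u z) = K.
Proof.
rewrite /K [RHS](reindex_inj (bxc_inj u)) /=.
by apply: eq_bigr => z _; rewrite W_shift.
Qed.

Lemma card_codon : #|{: codon}| = 64%N.
Proof. by rewrite !card_prod !card_ord. Qed.

Lemma sum_const64 (c : R) : \sum_(z : codon) c = 64 * c.
Proof. by rewrite sumr_const card_codon mulr_natl. Qed.

Lemma MI_le (p : codon -> R) : is_dist p -> MI q g m p <= K.
Proof.
case=> p0 p1.
have L0 : 0 < ln (2 : R) by apply: ln_gt0; lra.
pose A u z := p u * fW (Wm u z).
pose B u z := p u * Wm u z * ((64 * pZ q g m p z)^-1 - 1) / ln 2.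
apply: (@le_trans _ _ (\sum_u \sum_z (A u z + B u z))).
  apply: ler_sum => u _; apply: ler_sum => z _.
  rewrite /A /B /=.
  have [Hj|Hj] := eqVneq (p u * Wm u z) 0.
    rewrite Hj !mul0r addr0.
    move/eqP: Hj; rewrite mulf_eq0 => /orP [/eqP -> | /eqP ->]; first by rewrite mul0r.
    by rewrite /fW eqxx mulr0.
  have hpu : 0 < p u by rewrite lt_neqAle eq_sym p0 andbT; apply: contraNneq Hj => ->; rewrite mul0r.
  have hw : 0 < Wm u z by rewrite lt_neqAle eq_sym W_ge0 andbT; apply: contraNneq Hj => ->; rewrite mulr0.
  have hy : p u * Wm u z <= pZ q g m p z.
    rewrite /pZ (bigD1 u) //= lerDl; apply: sumr_ge0 => v _.
    by rewrite mulr_ge0 // W_ge0.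
  have hy0 : 0 < pZ q g m p z by apply: lt_le_trans hy; rewrite mulr_gt0.
  rewrite /fW gt_eqF //.
  exact: key.
under eq_bigr do rewrite big_split; rewrite big_split /=.
have -> : \sum_u \sum_z A u z = K.
  rewrite /A; under eq_bigr do rewrite -mulr_sumr K_u.
  by rewrite -mulr_suml p1 mul1r.
rewrite -[X in _ <= X]addr0 lerD2l exchange_big /=.
rewrite /B.
apply: (@le_trans _ _ (\sum_z (64^-1 - pZ q g m p z) / ln 2)).
  apply: ler_sum => z _.
  rewrite -!mulr_suml -/(pZ q g m p z).
  set y := pZ q g m p z.
  rewrite ler_pM2r ?invr_gt0 //.
  suff : y * (64 * y)^-1 <= 64^-1 by lra.
  have [->|y0] := eqVneq y 0; first by rewrite mul0r invr_ge0; lra.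
  by rewrite invfM mulrC -mulrA mulVf // mulr1.
rewrite -mulr_suml sumrB sum_const64.
have -> : \sum_z pZ q g m p z = 1.
  rewrite /pZ exchange_big /= -p1; apply: eq_bigr => u _.
  by rewrite -mulr_sumr W_row mulr1.
rewrite mulfV ?subrr ?mul0r //; lra.
Qed.
Lemma MI_unif : MI q g m (fun _ => 64^-1) = K.
Proof.
have n64 : (64 : R) != 0 by apply/eqP; lra.
have hZ z : pZ q g m (fun _ => 64^-1) z = 64^-1 by rewrite /pZ -mulr_sumr W_col mulr1.
rewrite /MI.
transitivity (\sum_(u : codon) \sum_(z : codon) 64^-1 * fW (Wm u z)).
  apply: eq_bigr => u _; apply: eq_bigr => z _.
  rewrite /= hZ /fW mulf_eq0 invr_eq0 (negPf n64) /=.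
  case: eqP => _; first by rewrite mulr0.
  by rewrite invrK mulrA [Wm u z * 64]mulrC /log2 !mulrA.
under eq_bigr do rewrite -mulr_sumr K_u.
by rewrite sum_const64 mulrA mulfV // mul1r.
Qed.
End S.

Lemma eq_MI (R : realType) q g m (p p' : codon -> R) : p =1 p' -> MI q g m p = MI q g m p'.
Proof.
move=> E; rewrite /MI /pZ.
apply: eq_bigr => u _; apply: eq_bigr => z _.
rewrite E; congr (if _ then _ else _ * log2 (_ / _)).
by apply: eq_bigr => v _; rewrite E.
Qed.

Definition fib (x : aa) : {set codon} := [set u | alpha u == x].

Lemma fib_card_gt0 x : (0 < #|fib x|)%N.
Proof. have [u Hu] := alpha_surj x; apply/card_gt0P; exists u; by rewrite inE Hu. Qed.

Lemma sum_fib (R : realType) (F : codon -> R) x :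
  \sum_(u | alpha u == x) F u = \sum_(u in fib x) F u.
Proof. by apply: eq_bigl => u; rewrite inE. Qed.

Lemma p_alpha_ge0 (R : realType) x : 0 <= @p_alpha R x.
Proof. by rewrite /p_alpha divr_ge0 // ler0n. Qed.

Lemma p_alpha_sum (R : realType) : \sum_x @p_alpha R x = 1.
Proof.
rewrite /p_alpha -mulr_suml.
have -> : \sum_(x : aa) (#|[set u | alpha u == x]|%:R : R) = \sum_(u : codon) \sum_(x : aa) (alpha u == x)%:R.
  rewrite exchange_big /=; apply: eq_bigr => x _.
  rewrite -sum1_card natr_sum big_mkcond /=; apply: eq_bigr => u _.
  by rewrite inE; case: (alpha u == x).
have -> : \sum_(u : codon) \sum_(x : aa) ((alpha u == x)%:R : R) = \sum_(u : codon) 1.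
  apply: eq_bigr => u _; rewrite (bigD1 (alpha u)) //= eqxx big1 ?addr0 // => x.
  by rewrite eq_sym => /negPf ->.
rewrite sum_const64 mulr1 mulfV //; apply/eqP.
have : (0 : R) < 64 by rewrite ltr0n.
by move/gt_eqF/negbT/eqP.
Qed.

Lemma joint_dist (R : realType) (c : aa -> codon -> R) :
  admissible_cond c -> is_dist (joint (@p_alpha R) c).
Proof.
move=> Hc; split.
  move=> u; rewrite /joint mulr_ge0 ?p_alpha_ge0 //.
  by case: (Hc (alpha u)) => [[H _] _]; apply: H.
rewrite /joint (partition_big alpha predT) //= -(p_alpha_sum R).
apply: eq_bigr => x _.
under eq_bigr => u /eqP Hu do rewrite Hu.
rewrite -mulr_sumr; case: (Hc x) => [[_ H1] H2].
rewrite -[RHS]mulr1 -H1; congr (_ * _).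
by rewrite [RHS](bigID (fun u => alpha u == x)) /= [X in _ + X]big1 ?addr0 // => u /H2.
Qed.

Theorem lemma2 (R : realType) (q g : R) (m : nat) :
  0 <= q <= 1 -> 0 <= g <= 3 / 2 -> (1 <= m)%N ->
  exists Cnc : R,
    is_max (fun v => exists p : codon -> R, is_dist p /\ v = MI q g m p) Cnc /\
    is_max (fun v => exists c : aa -> codon -> R,
               admissible_cond c /\
               v = MI q g m (joint (@p_alpha R) c) - entropy (@p_alpha R))
           (Cnc - entropy (@p_alpha R)).
Proof.
move=> hq hg _.
have n64 : (64 : R) != 0 by rewrite pnatr_eq0.
have udist : is_dist (fun _ : codon => (64 : R)^-1).
  split; first by move=> _; rewrite invr_ge0 ler0n.
  by rewrite sum_const64 mulfV.
exists (@K R q g m); split; [split|split].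
- exists (fun _ => 64^-1); split => //; by rewrite (@MI_unif R q g m).
- by move=> v [p [Hp ->]]; apply: (@MI_le R q g hq hg m).
- pose c x u : R := if alpha u == x then (#|fib x|%:R)^-1 else 0.
  exists c; split.
    move=> x; split; last by move=> u /negPf; rewrite /c => ->.
    split; first by move=> u; rewrite /c; case: ifP => // _; rewrite invr_ge0 ler0n.
    transitivity (\sum_(u | alpha u == x) (#|fib x|%:R : R)^-1).
      by rewrite /c [RHS]big_mkcond.
    rewrite sum_fib sumr_const.
    have -> : forall y : R, y *+ #|fib x| = y * #|fib x|%:R by move=> y; rewrite mulr_natr.
    rewrite mulVf //.
    by rewrite pnatr_eq0 -lt0n fib_card_gt0.
  congr (_ - _); rewrite -(@MI_unif R q g m); apply: eq_MI => u.
  rewrite /joint /c eqxx /p_alpha -/(fib (alpha u)).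
  have : (#|fib (alpha u)|%:R : R) != 0 by rewrite pnatr_eq0 -lt0n fib_card_gt0.
  by move=> H; field.
- move=> v [c [Hc ->]]; rewrite lerD2r; apply: (@MI_le R q g hq hg m) => //.
  exact: joint_dist.
Qed.
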